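(* Let $G$ be a finite non-abelian group which is exponent-critical. Then the order of $G$ is divisible by at most three distinct primes.
   Context: A finite group $G$ is called exponent-critical if the exponent $\exp(G)$ of $G$ is not equal to the least common multiple of the exponents of the proper non-abelian subgroups of $G$ (the least common multiple of an empty collection being $1$). *)

(* Defs.v *)
From mathcomp Require Import all_boot all_fingroup all_solvable.
Set Implicit Arguments. Unset Strict Implicit. Unset Printing Implicit Defensive.
Local Open Scope group_scope.

Definition lcm_exp_nonabelian_proper (gT : finGroupType) (G : {group gT}) : nat :=
  \big[lcmn/1%N]_(H : {group gT} | (H \proper G) && ~~ abelian H) exponent H.

Definition exponent_critical (gT : finGroupType) (G : {group gT}) : Prop :=
  exponent G <> lcm_exp_nonabelian_proper G.

(* Main.v *)
Require Import Defs.
From mathcomp Require Import all_boot all_fingroup all_solvable ssralg finalg.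
Set Implicit Arguments. Unset Strict Implicit. Unset Printing Implicit Defensive.
Local Open Scope group_scope.

Lemma ex_other_prime n a b c : 3 < size (primes n) ->
  exists2 r, r \in primes n & r \notin [:: a; b; c].
Proof.
move=> big.
case: (boolP (all (mem [:: a; b; c]) (primes n))) => [/allP sub | /allPn [r pr nr]]; last by exists r.
have := uniq_leq_size (primes_uniq n) sub.
by rewrite leqNgt big.
Qed.

Section Helpers.
Variable gT : finGroupType.
Implicit Types (G H A B : {group gT}).

Lemma primes_mulG A B r : r \in primes #|A * B| -> (r \in primes #|A|) || (r \in primes #|B|).
Proof.
rewrite mem_primes => /and3P[pr _ dv].
have: r %| (#|A| * #|B|)%N by rewrite mul_cardG dvdn_mulr.
by rewrite Euclid_dvdM // !mem_primes pr !cardG_gt0.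
Qed.

Lemma primes_pgroup A (q r : nat) : q.-group A -> r \in primes #|A| -> r = q.
Proof.
move=> /pgroupP qA; rewrite mem_primes => /and3P[pr _ dv].
by apply/eqP; have := qA r pr dv; rewrite inE.
Qed.

Lemma nonab_of H y z : y \in H -> z \in H -> z \notin 'C[y] -> ~~ abelian H.
Proof.
move=> Hy Hz nc; apply/negP => abH; case/negP: nc.
have: H \subset 'C[y] by rewrite sub_cent1 (subsetP abH).
by move/subsetP/(_ z Hz).
Qed.

Lemma noncomm_pelt G y0 z : y0 \in G -> y0 \notin 'C[z] ->
  exists q, exists2 y, [/\ prime q, q.-elt y & y \in G] & y \notin 'C[z].
Proof.
move=> Gy0 nC.
case: (pickP [pred q : 'I_#[y0].+1 | prime q && (y0.`_q \notin 'C[z])]) => [q /andP[pq nq] | none].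
  exists (nat_of_ord q), y0.`_q => //; split => //; first exact: p_elt_constt.
  by rewrite (subsetP _ _ (cycle_constt _ _)) // cycle_subG.
case/negP: nC; rewrite -(prod_constt y0) big_mkord; apply: group_prod => q _.
have := none q; rewrite /=.
case: (boolP (prime q)) => [pq /= /negbFE // | npq _].
rewrite (constt1P _) ?group1 //.
apply: (sub_in_pnat _ (pnat_pi (order_gt0 y0))) => t _ pit; rewrite !inE.
apply: contraNneq npq => <-; move: pit; rewrite mem_primes.
by case/and3P.
Qed.
End Helpers.
Import GRing.Theory FinRing.Theory FiniteModule.
Local Open Scope group_scope.

Section Burnside.
Variables (gT : finGroupType) (G S : {group gT}) (s : nat).
Hypotheses (sylS : s.-Sylow(G) S) (nSc : 'N_G(S) \subset 'C(S)).

Let sSG : S \subset G := pHall_sub sylS.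
Let abS : abelian S.
Proof. by rewrite /abelian (subset_trans _ nSc) // subsetI sSG normG. Qed.

Lemma burnside_fusion h x : x \in G -> h \in S -> h ^ x \in S -> h ^ x = h.
Proof.
move=> Gx Sh Shx.
have sylSx : s.-Sylow(G) (S :^ x) by rewrite pHallJ.
have cS : S \subset 'C_G[h ^ x].
  by rewrite subsetI sSG sub_cent1 (subsetP abS).
have cSx : S :^ x \subset 'C_G[h ^ x].
  rewrite subsetI (pHall_sub sylSx) sub_cent1.
  have abSx : abelian (S :^ x) by rewrite abelianJ.
  by apply: (subsetP abSx); rewrite memJ_conjg.
have sCG : 'C_G[h ^ x] \subset G := subsetIl _ _.
have [c /setIP[Gc Cc] defS] := Sylow_trans (pHall_subl cSx sCG sylSx) (pHall_subl cS sCG sylS).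
have Nxc : x * c \in 'N_G(S).
  by rewrite inE groupM //; apply/normP; rewrite conjsgM -defS.
have := subsetP nSc _ Nxc; move/centP => cxc.
have e1 : h ^ (x * c) = h by rewrite /conjg -(cxc h Sh) mulKg.
move/cent1P: Cc; rewrite /commute => H.
have e2 : (h ^ x) ^ c = h ^ x.
  by apply/conjg_fixP/commgP; rewrite /commute H.
by rewrite -{2}e1 conjgM e2.
Qed.


Let abA : abelian (idm S @* S).
Proof. by rewrite morphim_idm. Qed.

Let tau := transfer G abA.

Lemma transfer_S g : g \in S -> tau g = (fmod abA g *+ #|G : S|)%R.
Proof.
move=> Sg; have Gg := subsetP sSG g Sg.
have trX := transversalP (rcosets_cycle_partition sSG Gg).
rewrite /tau (transfer_cycle_expansion sSG abA Gg trX).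
rewrite -(sum_index_rcosets_cycle sSG Gg trX) -sumrMnr.
apply: eq_bigr => x Xx.
have Gx : x \in G by apply: (subsetP (transversal_sub trX)).
set n := #|_ : _|.
have Shn : g ^+ n \in S by rewrite groupX.
have Sc : (g ^+ n) ^ x^-1 \in S.
  have := mulg_exp_card_rcosets S g x; rewrite -/n mem_rcoset.
  by rewrite conjgE invgK mulgA.
rewrite /= (burnside_fusion (groupVr Gx) Shn Sc) /=.
rewrite /restrm /= (_ : idm S (g ^+ n) = g ^+ n) //.
rewrite fmodX //.
by move: Sg; rewrite -{1}(morphim_idm (subxx S)).
Qed.


Lemma burnside_complement :
  exists M : {group gT},
    [/\ M <| G, M :&: S = 1 & forall y, y \in G -> s^'.-elt y -> y \in M].
Proof.
have [_ sS sGS] := and3P sylS.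
have coS : coprime #|S| #|G : S| := pnat_coprime sS sGS.
exists ('ker (transfer_morphism G abA))%G; split.
- exact: ker_normal.
- apply/trivgP/subsetP => g /setIP[Kg Sg]; rewrite inE.
  have := mker Kg; rewrite /= -/tau transfer_S // zmod1gE => e0.
  have : fmval (fmod abA g *+ #|G : S|)%R = fmval (0 : fmod_of abA).
    by rewrite e0.
  rewrite fmvalZ fmval0 fmodK; last by move: Sg; rewrite -{1}(morphim_idm (subxx S)).
  move/eqP; rewrite -order_dvdn => dv.
  have : #[g] %| gcdn #|S| #|G : S| by rewrite dvdn_gcd dv order_dvdG.
  by rewrite (eqP coS) dvdn1 order_eq1.
- move=> y Gy sy; apply/kerP => //=; rewrite -/tau zmod1gE.
  set u := tau y.
  have uy : (u *+ #[y])%R = 0%R.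
    rewrite -zmodXgE /u -(morphX (transfer_morphism G abA)) //= expg_order.
    by rewrite -zmod1gE -(morph1 (transfer_morphism G abA)).
  apply: (@fmod_inj _ _ abA); rewrite fmval0.
  have : fmval (u *+ #[y])%R = fmval (0 : fmod_of abA) by rewrite uy.
  rewrite fmvalZ fmval0; move/eqP; rewrite -order_dvdn => dv.
  have Sa : fmval u \in idm S @* S := fmodP u.
  rewrite morphim_idm // in Sa.
  have : #[fmval u] %| gcdn #|S| #[y] by rewrite dvdn_gcd dv order_dvdG.
  by rewrite (eqP (pnat_coprime sS sy)) dvdn1 order_eq1 => /eqP.
Qed.
End Burnside.

Lemma pelt_p'elt (gT : finGroupType) (t s : nat) (w : gT) : t.-elt w -> t != s -> s^'.-elt w.
Proof.
move=> tw nts; apply: sub_in_pnat tw => u _; rewrite !inE => /eqP ->; exact: nts.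
Qed.

Section Main.
Variables (gT : finGroupType) (G : {group gT}) (p : nat) (x : gT).
Hypotheses (pp : prime p) (Gx : x \in G) (px : p.-elt x) (nabG : ~~ abelian G).
Hypothesis crit : forall H : {group gT}, H \subset G -> x \in H -> ~~ abelian H -> H :=: G.
Hypothesis big : 3 < size (primes #|G|).

Lemma crit_ab (H : {group gT}) : H \subset G -> x \in H -> H :!=: G -> abelian H.
Proof. by move=> sHG xH; apply: contraR => nab; apply/eqP; apply: crit. Qed.

Lemma not_full (H : {group gT}) a b c :
  (forall r, r \in primes #|H| -> r \in [:: a; b; c]) -> H :!=: G.
Proof.
move=> sub; have [r rG nr] := ex_other_prime a b c big.
by apply/eqP => eHG; case/negP: nr; apply: sub; rewrite eHG.
Qed.

Lemma join_cycle_ab (A : {group gT}) (t : nat) :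
  A \subset G -> t.-group A -> <[x]> \subset 'N(A) -> abelian (A <*> <[x]>).
Proof.
move=> sAG tA nAx.
apply: crit_ab; first by rewrite join_subG sAG cycle_subG.
  by rewrite (subsetP (joing_subr _ _)) ?cycle_id.
apply: (not_full (a := t) (b := p) (c := p)) => r.
rewrite /= norm_joinEr // => /primes_mulG /orP[].
  by move/(primes_pgroup tA) ->; rewrite !inE eqxx.
by move/(primes_pgroup (A := <[x]>%G) px) ->; rewrite !inE eqxx ?orbT.
Qed.


Lemma caseB : G \subset 'C[x] -> False.
Proof.
move=> cGx.
have xZ : x \in 'C(G) by rewrite -sub_cent1.
have [y0 Gy0 ny0] : exists2 y0, y0 \in G & y0 \notin 'C(G) by apply/subsetPn.
have [z0 Gz0 nz0] : exists2 z0, z0 \in G & z0 \notin 'C[y0].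
  by apply/subsetPn; rewrite sub_cent1.
have [q [y [pq qy Gy] nyy0]] := noncomm_pelt Gz0 nz0.
rewrite cent1C in nyy0.
have [r [z [pr rz Gz] nzy]] := noncomm_pelt Gy0 nyy0.
have [s sG ns] := ex_other_prime p q r big.
rewrite !inE !negb_or in ns; case/and3P: ns => nsp nsq nsr.
have ps : prime s by move: sG; rewrite mem_primes => /andP[].
have [S sylS] := Sylow_exists s G.
have sSG := pHall_sub sylS; have sS := pHall_pgroup sylS.
have xCS : x \in 'C(S) := subsetP (centS sSG) x xZ.
have nSx : <[x]> \subset 'N(S) by rewrite cycle_subG (subsetP (cent_sub S)).
have abS : abelian S.
  exact: abelianS (joing_subl _ _) (join_cycle_ab sSG sS nSx).
have nNc : 'N_G(S) \subset 'C(S).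
  case: (boolP (abelian 'N_G(S))) => [abN | nabN].
    by apply: sub_abelian_cent abN _; rewrite subsetI sSG normG.
  have xN : x \in 'N_G(S) by rewrite inE Gx (subsetP (cent_sub S)).
  have eN := crit (subsetIl _ _) xN nabN.
  have nSG : G \subset 'N(S) by rewrite -eN subsetIr.
  have elt_cent (t : nat) w : t.-elt w -> w \in G -> w \in 'C(S).
    move=> tw Gw.
    have nSw : <[w]> \subset 'N(S) by rewrite cycle_subG (subsetP nSG).
    have sTG : S <*> <[w]> \subset G by rewrite join_subG sSG cycle_subG.
    have nTx : <[x]> \subset 'N(S <*> <[w]>).
      by rewrite cycle_subG (subsetP (cent_sub _)) // (subsetP (centS sTG)).
    set T := (S <*> <[w]>)%G.
    have abH : abelian (T <*> <[x]>).
      apply: crit_ab; first by rewrite join_subG sTG cycle_subG.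
        by rewrite (subsetP (joing_subr _ _)) ?cycle_id.
      apply: (not_full (a := s) (b := t) (c := p)) => u.
      rewrite /= norm_joinEr // => /primes_mulG /orP[]; last first.
        by move/(primes_pgroup (A := <[x]>%G) px) ->; rewrite !inE eqxx ?orbT.
      rewrite /T /= norm_joinEr // => /primes_mulG /orP[].
        by move/(primes_pgroup sS) ->; rewrite !inE eqxx.
      by move/(primes_pgroup (A := <[w]>%G) tw) ->; rewrite !inE eqxx ?orbT.
    have sSH : S \subset T <*> <[x]>.
      exact: subset_trans (joing_subl S <[w]>) (joing_subl T _).
    have wH : w \in T <*> <[x]>.
      by rewrite (subsetP (joing_subl T _)) // (subsetP (joing_subr S _)) ?cycle_id.
    exact: (subsetP (sub_abelian_cent abH sSH)).
  have xC : x \in 'C_G(S) by rewrite inE Gx.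
  have yC : y \in 'C_G(S) by rewrite inE Gy (elt_cent q).
  have zC : z \in 'C_G(S) by rewrite inE Gz (elt_cent r).
  have eC := crit (subsetIl _ _) xC (nonab_of yC zC nzy).
  by apply: subIset; rewrite -{1}eC subsetIr.
have [M [nsMG tiMS sM]] := burnside_complement sylS nNc.
have eM : M :=: G.
  have nps : p != s by rewrite eq_sym.
  apply: crit (normal_sub nsMG) (sM x Gx (pelt_p'elt px nps)) _.
  apply: (nonab_of (sM y Gy (pelt_p'elt qy _)) (sM z Gz (pelt_p'elt rz _)) nzy).
    by rewrite eq_sym.
  by rewrite eq_sym.
rewrite eM (setIidPr sSG) in tiMS.
have := card_Hall sylS; rewrite tiMS cards1 => e1.
by move: (p_part_gt1 s #|G|); rewrite -e1 ltnn inE sG.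
Qed.


Lemma caseA : ~~ (G \subset 'C[x]) -> False.
Proof.
move=> ncx.
have [y0 Gy0 ny0] := subsetPn ncx.
have [q [y [pq qy Gy] nyx]] := noncomm_pelt Gy0 ny0.
have sxG : <[x]> \subset G by rewrite cycle_subG.
have [P sylP sxP] := Sylow_superset sxG px.
have xP : x \in P by rewrite -cycle_subG.
have sPG := pHall_sub sylP; have pP := pHall_pgroup sylP.
have abP : abelian P.
  apply: crit_ab sPG xP _; apply: (not_full (a := p) (b := p) (c := p)) => r.
  by move/(primes_pgroup pP) ->; rewrite !inE eqxx.
have nNc : 'N_G(P) \subset 'C(P).
  case: (boolP (abelian 'N_G(P))) => [abN | nabN].
    by apply: sub_abelian_cent abN _; rewrite subsetI sPG normG.
  have xN : x \in 'N_G(P) by rewrite inE Gx (subsetP (normG P)).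
  have eN := crit (subsetIl _ _) xN nabN.
  have nPG : G \subset 'N(P) by rewrite -eN subsetIr.
  have nPy : <[y]> \subset 'N(P) by rewrite cycle_subG (subsetP nPG).
  have sHG : P <*> <[y]> \subset G by rewrite join_subG sPG cycle_subG.
  have xH : x \in P <*> <[y]> by rewrite (subsetP (joing_subl _ _)).
  have yH : y \in P <*> <[y]> by rewrite (subsetP (joing_subr _ _)) ?cycle_id.
  have eH := crit sHG xH (nonab_of xH yH nyx).
  have : (P <*> <[y]>)%G :!=: G.
    apply: (not_full (a := p) (b := q) (c := q)) => u.
    rewrite /= norm_joinEr // => /primes_mulG /orP[].
      by move/(primes_pgroup pP) ->; rewrite !inE eqxx.
    by move/(primes_pgroup (A := <[y]>%G) qy) ->; rewrite !inE eqxx ?orbT.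
  by rewrite eH eqxx.
have [M [nsMG tiMP sM]] := burnside_complement sylP nNc.
have sMG := normal_sub nsMG; have nMG := normal_norm nsMG.
have p'M : ~~ (p %| #|M|).
  apply/negP => /(Cauchy pp) [a Ma oa].
  have Ga := subsetP sMG a Ma.
  have pa : p.-group <[a]> by rewrite /pgroup -/#[a] oa pnat_id.
  have saG : <[a]> \subset G by rewrite cycle_subG.
  have [g Gg sag] := Sylow_Jsub sylP saG pa.
  have aP : a ^ g \in P by rewrite (subsetP sag) // memJ_conjg cycle_id.
  have aM : a ^ g \in M by rewrite memJ_norm // (subsetP nMG).
  have : a ^ g \in M :&: P by rewrite inE aM aP.
  rewrite tiMP inE conjg_eq1 => /eqP a1.
  by move: oa; rewrite a1 order1 => p1; move: pp; rewrite -p1.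
have coMx : coprime #|M| #|<[x]>|.
  by rewrite coprime_sym; apply: (pnat_coprime px); rewrite p'natE.
have nMx : <[x]> \subset 'N(M) by rewrite cycle_subG (subsetP nMG).
have cC : forall s, s \in \pi(#|G|) -> (#|G|`_s)%N %| #|'C_G[x]|.
  move=> s sG; case: (eqVneq s p) => [-> | nsp].
    rewrite -(card_Hall sylP); apply: cardSg.
    by rewrite subsetI sPG sub_cent1 (subsetP abP).
  have [S' sylS' nS'x] :=
    sol_coprime_Sylow_exists s (abelian_sol (cycle_abelian x)) nMx coMx.
  have [S0 sylS0] := Sylow_exists s G.
  have sS0M : S0 \subset M.
    apply/subsetP => w S0w; apply: sM (subsetP (pHall_sub sylS0) w S0w) _.
    exact: pelt_p'elt (mem_p_elt (pHall_pgroup sylS0) S0w) nsp.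
  have e0 : #|S'| = (#|G|`_s)%N.
    by rewrite (card_Hall sylS') -(card_Hall (pHall_subl sS0M sMG sylS0)) (card_Hall sylS0).
  have sS'G : S' \subset G := subset_trans (pHall_sub sylS') sMG.
  have abH := join_cycle_ab sS'G (pHall_pgroup sylS') nS'x.
  have xH : x \in S' <*> <[x]> by rewrite (subsetP (joing_subr _ _)) ?cycle_id.
  rewrite -e0; apply: cardSg; rewrite subsetI sS'G sub_cent1.
  exact: (subsetP (sub_abelian_cent abH (joing_subl _ _))).
have dG : #|G| %| #|'C_G[x]| by apply/(dvdn_partP _ (cardG_gt0 G)).
have e : 'C_G[x] == G by rewrite eqEcard subsetIl dvdn_leq.
by case/negP: ncx; rewrite -(eqP e) subsetIr.
Qed.

End Main.

Theorem theoremA (gT : finGroupType) (G : {group gT}) :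
  ~~ abelian G -> exponent_critical G -> (size (primes #|G|) <= 3)%N.
Proof.
move=> nabG crit_exp.
set e := exponent G; set L := lcm_exp_nonabelian_proper G.
have Le : L %| e.
  apply/dvdn_biglcmP => H /andP[pHG _]; exact: exponentS (proper_sub pHG).
have [p pe npL] : exists2 p : nat, p \in primes e & ~~ ((e`_p)%N %| L).
  case: (boolP (all (fun p : nat => (e`_p)%N %| L) (primes e))) => [/allP al | /allPn //].
  exfalso; apply: crit_exp; apply/eqP; rewrite -/e -/L eqn_dvd Le andbT.
  by apply/(dvdn_partP _ (exponent_gt0 G)) => r; rewrite inE => /al.
have pp : prime p by move: pe; rewrite mem_primes => /andP[].
have [P sylP] := Sylow_exists p G.
have [x Px ex] := exponent_witness (pgroup_nil (pHall_pgroup sylP)).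
rewrite (exponent_Hall sylP) -/e in ex.
have Gx := subsetP (pHall_sub sylP) x Px.
have px := mem_p_elt (pHall_pgroup sylP) Px.
have crit : forall H : {group gT}, H \subset G -> x \in H -> ~~ abelian H -> H :=: G.
  move=> H sHG xH nabH; apply/eqP; case: eqP => // /eqP nHG.
  case/negP: npL; rewrite ex; apply: dvdn_trans (dvdn_exponent xH) _.
  by apply: (biglcmn_sup H) => //=; rewrite properEneq nHG sHG nabH.
rewrite leqNgt; apply/negP => big.
case: (boolP (G \subset 'C[x])) => [cx | ncx].
  exact: caseB Gx px nabG crit big cx.
exact: caseA pp Gx px crit big ncx.
Qed.
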